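(* Assume inhibitory coupling ($\varepsilon_{ij}\le0$ for all $i,j$ and $\varepsilon<0$). Assume the directed graph $G$ with an edge $j\to i$ exactly when $j\in\mathrm{Pre}(i)$ is strongly connected, and let $l_c\le N-1$ be its diameter. Let $\boldsymbol\delta(0)\in\mathbb R^N$, and define $\boldsymbol\delta(l)=A(\mathcal O_l)\boldsymbol\delta(l-1)$ for $l\ge1$. Here $\mathcal O_l$ is an ordering consistent with $\boldsymbol\delta(l-1)$: for each $i$, $\delta_{j_1(i)}(l-1)\ge\delta_{j_2(i)}(l-1)\ge\dots\ge\delta_{j_{k_i}(i)}(l-1)$. Then: 1. If all $\delta_i(0)\ge0$ and $\boldsymbol\delta(0)$ is not a multiple of $(1,\dots,1)^{\mathsf T}$, then $\max_i\delta_i(l)<\max_i\delta_i(0)$ for all $l\ge l_c$. 2. There is a constant $c\in\mathbb R$ such that $\boldsymbol\delta(l)\to c\,(1,\dots,1)^{\mathsf T}$ as $l\to\infty$; that is, the synchronous state is asymptotically stable (modulo uniform phase shifts).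
   Context: Let $U$ be a twice continuously differentiable, strictly increasing function on an interval $I\subseteq\mathbb R$ containing $(-\infty,1]$. Assume $U'>0$ and $U''<0$ on $I$, $U(0)=0$ and $U(1)=1$. Fix $N\ge 2$ and a delay $\tau\in(0,1)$. For each $i$ fix a nonempty set $\mathrm{Pre}(i)\subseteq\{1,\dots,N\}\setminus\{i\}$ and put $k_i=|\mathrm{Pre}(i)|$. Fix real couplings $\varepsilon_{ij}$ with $\varepsilon_{ij}\neq0$ if and only if $j\in\mathrm{Pre}(i)$, normalized so that $\sum_j\varepsilon_{ij}=\varepsilon$ for every $i$. An ordering $\mathcal O$ is a choice, for each $i$, of an enumeration $j_1(i),\dots,j_{k_i}(i)$ of $\mathrm{Pre}(i)$. For $n\in\{0,\dots,k_i\}$ define $$p_{i,n}=\frac{U'\Big(U^{-1}\big(U(\tau)+\sum_{m=1}^{n}\varepsilon_{ij_m(i)}\big)\Big)}{U'\big(U^{-1}(U(\tau)+\varepsilon)\big)}.$$ The stability matrix $A(\mathcal O)$ has entries - $A_{ii}=p_{i,0}$; - $A_{ij}=p_{i,n}-p_{i,n-1}$ if $j=j_n(i)$; - $A_{ij}=0$ if $j\notin\mathrm{Pre}(i)\cup\{i\}$. The diameter of a strongly connected digraph is the maximum over ordered pairs of vertices of the length of a shortest directed path between them. *)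

(* Defs.v *)
(* classical reals. Nodes are indexed 0..N-1 (paper: 1..N). *)
From Stdlib Require Import Reals List Arith.
Import ListNotations.
Open Scope R_scope.

Fixpoint rsum (f : nat -> R) (n : nat) : R :=
  match n with O => 0 | S k => rsum f k + f k end.

Fixpoint maxUpTo (f : nat -> R) (n : nat) : R :=
  match n with O => f O | S k => Rmax (maxUpTo f k) (f (S k)) end.

Definition vmax (N : nat) (f : nat -> R) : R := maxUpTo f (N - 1).

Definition is_interval (I : R -> Prop) : Prop :=
  forall a b c, I a -> I c -> a <= b -> b <= c -> I b.

Definition Pre (N : nat) (eps : nat -> nat -> R) (i j : nat) : Prop :=
  (j < N)%nat /\ eps i j <> 0.

Definition is_ordering (N : nat) (eps : nat -> nat -> R) (Ord : nat -> list nat) : Prop :=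
  forall i, (i < N)%nat ->
    NoDup (Ord i) /\ forall j, In j (Ord i) <-> Pre N eps i j.

Definition p_coef (U dU Uinv : R -> R) (tau epsilon : R) (eps : nat -> nat -> R)
    (Ord : nat -> list nat) (i n : nat) : R :=
  dU (Uinv (U tau + rsum (fun m => eps i (nth m (Ord i) 0%nat)) n))
  / dU (Uinv (U tau + epsilon)).

Fixpoint pos (j : nat) (l : list nat) : option nat :=
  match l with
  | [] => None
  | x :: r => if Nat.eqb x j then Some O
              else match pos j r with Some k => Some (S k) | None => None end
  end.

(* Stability matrix A(O). For j = j_n(i) (1-based n = m+1 where m is the 0-based
   position), A_ij = p_{i,m+1} - p_{i,m}. *)
Definition Amat (U dU Uinv : R -> R) (tau epsilon : R) (eps : nat -> nat -> R)
    (Ord : nat -> list nat) (i j : nat) : R :=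
  if Nat.eqb i j then p_coef U dU Uinv tau epsilon eps Ord i 0
  else match pos j (Ord i) with
       | Some m => p_coef U dU Uinv tau epsilon eps Ord i (S m)
                   - p_coef U dU Uinv tau epsilon eps Ord i m
       | None => 0
       end.

Definition consistent (N : nat) (Ord : nat -> list nat) (d : nat -> R) : Prop :=
  forall i, (i < N)%nat -> forall m1 m2, (m1 < m2)%nat -> (m2 < length (Ord i))%nat ->
    d (nth m1 (Ord i) 0%nat) >= d (nth m2 (Ord i) 0%nat).

Inductive walk (N : nat) (eps : nat -> nat -> R) : nat -> nat -> nat -> Prop :=
  | walk0 : forall a, walk N eps 0 a a
  | walkS : forall k a b c, walk N eps k a b -> Pre N eps c b -> walk N eps (S k) a c.

Definition strongly_connected (N : nat) (eps : nat -> nat -> R) : Prop :=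
  forall a b, (a < N)%nat -> (b < N)%nat -> exists k, walk N eps k a b.

Definition is_diameter (N : nat) (eps : nat -> nat -> R) (lc : nat) : Prop :=
  (forall a b, (a < N)%nat -> (b < N)%nat -> exists k, (k <= lc)%nat /\ walk N eps k a b) /\
  (exists a b, (a < N)%nat /\ (b < N)%nat /\ forall k, (k < lc)%nat -> ~ walk N eps k a b).

(* Main.v *)
Require Import Defs.
From Stdlib Require Import Reals List Arith.
From Stdlib Require Import Lra Lia Ranalysis5 Classical_Prop.
Import ListNotations.
Open Scope R_scope.


Lemma rsum_ext f g n : (forall j, (j < n)%nat -> f j = g j) -> rsum f n = rsum g n.
Proof. induction n; simpl; intros; auto. rewrite IHn, H; auto. Qed.

Lemma rsum_plus f g n : rsum (fun j => f j + g j) n = rsum f n + rsum g n.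
Proof. induction n; simpl; [lra| rewrite IHn; lra]. Qed.

Lemma rsum_scal c f n : rsum (fun j => c * f j) n = c * rsum f n.
Proof. induction n; simpl; [lra| rewrite IHn; lra]. Qed.

Lemma rsum_le f g n : (forall j, (j < n)%nat -> f j <= g j) -> rsum f n <= rsum g n.
Proof. induction n; simpl; intros; [lra|]. pose proof (H n ltac:(lia)). pose proof (IHn ltac:(intros; apply H; lia)). lra. Qed.

Lemma rsum_nonneg f n : (forall j, (j < n)%nat -> 0 <= f j) -> 0 <= rsum f n.
Proof. intros. replace 0 with (rsum (fun _ => 0) n). apply rsum_le; auto.
 clear H; induction n; simpl; auto; lra. Qed.

Lemma rsum_ge_term f n k : (forall j, (j < n)%nat -> 0 <= f j) -> (k < n)%nat -> f k <= rsum f n.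
Proof. induction n; intros; [lia|]. simpl. destruct (Nat.eq_dec k n).
 - subst. assert (0 <= rsum f n) by (apply rsum_nonneg; intros; apply H; lia). lra.
 - assert (f k <= rsum f n) by (apply IHn; [intros; apply H; lia| lia]). pose proof (H n ltac:(lia)). lra. Qed.

Lemma rsum_sub f g n : rsum (fun j => f j - g j) n = rsum f n - rsum g n.
Proof. induction n; simpl; [lra| rewrite IHn; lra]. Qed.

Definition good_sys (N : nat) (eps : nat -> nat -> R) (W : nat -> nat -> nat -> R)
  (d : nat -> nat -> R) (al : R) : Prop :=
  0 < al /\ forall l i, (1 <= l)%nat -> (i < N)%nat ->
    (forall j, (j < N)%nat -> 0 <= W l i j) /\ rsum (W l i) N = 1 /\ al <= W l i i /\
    (forall j, Pre N eps i j -> al <= W l i j) /\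
    d l i = rsum (fun j => W l i j * d (l - 1)%nat j) N.

Lemma good_opp N eps W d al : good_sys N eps W d al -> good_sys N eps W (fun l i => - d l i) al.
Proof. intros [Ha H]. split; auto. intros l i Hl Hi. destruct (H l i Hl Hi) as (?&?&?&?&Hd).
 repeat split; auto. rewrite Hd.
 rewrite (rsum_ext (fun j => W l i j * - d (l-1)%nat j) (fun j => -1 * (W l i j * d (l-1)%nat j))) by (intros; ring).
 rewrite rsum_scal; ring. Qed.



Lemma step_le N eps W d al l M : good_sys N eps W d al ->
  (forall j, (j < N)%nat -> d l j <= M) -> forall i, (i < N)%nat -> d (S l) i <= M.
Proof. intros [Ha H] Hb i Hi. destruct (H (S l) i ltac:(lia) Hi) as (Hn&Hs&_&_&Hd).
 rewrite Hd. replace (S l - 1)%nat with l by lia.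
 apply Rle_trans with (rsum (fun j => W (S l) i j * M) N).
 - apply rsum_le; intros. apply Rmult_le_compat_l; auto.
 - rewrite (rsum_ext (fun j => W (S l) i j * M) (fun j => M * W (S l) i j)) by (intros; ring). rewrite rsum_scal, Hs. lra. Qed.

Lemma step_gap N eps W d al l M : good_sys N eps W d al ->
  (forall j, (j < N)%nat -> d l j <= M) -> forall i k, (i < N)%nat -> (k < N)%nat ->
  W (S l) i k * (M - d l k) <= M - d (S l) i.
Proof. intros [Ha H] Hb i k Hi Hk. destruct (H (S l) i ltac:(lia) Hi) as (Hn&Hs&_&_&Hd).
 rewrite Hd. replace (S l - 1)%nat with l by lia.
 replace (M - rsum (fun j => W (S l) i j * d l j) N) with (rsum (fun j => W (S l) i j * (M - d l j)) N).
 - apply (rsum_ge_term (fun j => W (S l) i j * (M - d l j))); auto.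
   intros. apply Rmult_le_pos; auto. pose proof (Hb j H0); lra.
 - rewrite (rsum_ext (fun j => W (S l) i j * (M - d l j)) (fun j => M * W (S l) i j - W (S l) i j * d l j)) by (intros; ring).
   rewrite rsum_sub, rsum_scal, Hs. ring. Qed.

Lemma bound_all N eps W d al l0 M : good_sys N eps W d al ->
  (forall j, (j < N)%nat -> d l0 j <= M) -> forall t j, (j < N)%nat -> d (l0 + t)%nat j <= M.
Proof. intros G Hb t. induction t; intros. rewrite Nat.add_0_r; auto.
 replace (l0 + S t)%nat with (S (l0 + t)) by lia. eapply step_le; eauto. Qed.

Lemma gap_walk N eps W d al l0 M : good_sys N eps W d al ->
  (forall j, (j < N)%nat -> d l0 j <= M) ->
  forall k a c, walk N eps k a c -> (c < N)%nat -> forall t, (k <= t)%nat ->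
  al ^ t * (M - d l0 a) <= M - d (l0 + t)%nat c.
Proof. intros G Hb k a c Hw. pose proof G as [Ha H]. induction Hw as [a0 | k a b c Hw IHHw H0]; intros Hc t Ht.
 - induction t. rewrite Nat.add_0_r; simpl; lra.
   replace (l0 + S t)%nat with (S (l0 + t)) by lia.
   pose proof (step_gap _ _ _ _ _ _ _ G (bound_all _ _ _ _ _ _ _ G Hb t) a0 a0 Hc Hc).
   destruct (H (S (l0 + t)) a0 ltac:(lia) Hc) as (_&_&Hii&_).
   pose proof (bound_all _ _ _ _ _ _ _ G Hb t a0 Hc).
   assert (al ^ t * (M - d l0 a0) <= M - d (l0 + t)%nat a0) by (apply IHt; lia).
   simpl. assert (al * (al ^ t * (M - d l0 a0)) <= al * (M - d (l0 + t)%nat a0)) by (apply Rmult_le_compat_l; lra).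
   assert (al * (M - d (l0 + t)%nat a0) <= W (S (l0 + t)) a0 a0 * (M - d (l0 + t)%nat a0)) by (apply Rmult_le_compat_r; lra).
   lra.
 - destruct t as [|t]; [lia|]. destruct H0 as [Hb' He].
   assert (IH: al ^ t * (M - d l0 a) <= M - d (l0 + t)%nat b) by (apply IHHw; auto; lia).
   replace (l0 + S t)%nat with (S (l0 + t)) by lia.
   pose proof (step_gap _ _ _ _ _ _ _ G (bound_all _ _ _ _ _ _ _ G Hb t) c b Hc Hb').
   destruct (H (S (l0 + t)) c ltac:(lia) Hc) as (_&_&_&Hp&_).
   pose proof (Hp b (conj Hb' He)).
   pose proof (bound_all _ _ _ _ _ _ _ G Hb t b Hb').
   simpl. assert (al * (al ^ t * (M - d l0 a)) <= al * (M - d (l0 + t)%nat b)) by (apply Rmult_le_compat_l; lra).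
   assert (al * (M - d (l0 + t)%nat b) <= W (S (l0 + t)) c b * (M - d (l0 + t)%nat b)) by (apply Rmult_le_compat_r; lra).
   lra. Qed.

Lemma maxUpTo_ge f n i : (i <= n)%nat -> f i <= maxUpTo f n.
Proof. induction n; intros; simpl. replace i with 0%nat by lia; lra.
 destruct (Nat.eq_dec i (S n)). subst; apply Rmax_r.
 eapply Rle_trans; [apply IHn; lia| apply Rmax_l]. Qed.

Lemma maxUpTo_le f n B : (forall i, (i <= n)%nat -> f i <= B) -> maxUpTo f n <= B.
Proof. induction n; intros; simpl. apply H; lia.
 apply Rmax_lub. apply IHn; intros; apply H; lia. apply H; lia. Qed.

Lemma maxUpTo_att f n : exists i, (i <= n)%nat /\ maxUpTo f n = f i.
Proof. induction n; simpl. exists 0%nat; split; auto.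
 destruct IHn as [i [Hi E]]. unfold Rmax. destruct (Rle_dec (maxUpTo f n) (f (S n))).
 exists (S n); auto. exists i; split; auto. Qed.

Lemma vmax_ge N f i : (i < N)%nat -> f i <= vmax N f.
Proof. intros; unfold vmax; apply maxUpTo_ge; lia. Qed.
Lemma vmax_le N f B : (1 <= N)%nat -> (forall i, (i < N)%nat -> f i <= B) -> vmax N f <= B.
Proof. intros; unfold vmax; apply maxUpTo_le; intros; apply H0; lia. Qed.
Lemma vmax_att N f : (1 <= N)%nat -> exists i, (i < N)%nat /\ vmax N f = f i.
Proof. intros; unfold vmax; destruct (maxUpTo_att f (N-1)) as [i [? ?]]; exists i; split; auto; lia. Qed.

Lemma gap_all N eps W d al l0 lc : (1 <= N)%nat -> good_sys N eps W d al ->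
  (forall a b, (a < N)%nat -> (b < N)%nat -> exists k, (k <= lc)%nat /\ walk N eps k a b) ->
  forall t i j, (lc <= t)%nat -> (i < N)%nat -> (j < N)%nat ->
  al ^ t * (vmax N (d l0) - d l0 j) <= vmax N (d l0) - d (l0 + t)%nat i.
Proof. intros HN G Hd t i j Ht Hi Hj. destruct (Hd j i Hj Hi) as [k [Hk Hw]].
 eapply gap_walk; eauto. intros; apply vmax_ge; auto. lia. Qed.

Definition Mx N (d : nat -> nat -> R) l := vmax N (d l).
Definition mn N (d : nat -> nat -> R) l := - vmax N (fun i => - d l i).

Lemma mn_le N d l i : (i < N)%nat -> mn N d l <= d l i.
Proof. unfold mn; intros. pose proof (vmax_ge N (fun i => - d l i) i H). simpl in H0; lra. Qed.
Lemma Mx_ge N d l i : (i < N)%nat -> d l i <= Mx N d l.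
Proof. unfold Mx; intros. apply vmax_ge; auto. Qed.

Lemma Mx_dec N eps W d al l : (1 <= N)%nat -> good_sys N eps W d al -> Mx N d (S l) <= Mx N d l.
Proof. intros. unfold Mx. apply vmax_le; auto. intros. eapply step_le; eauto. intros; apply vmax_ge; auto. Qed.

Lemma mn_inc N eps W d al l : (1 <= N)%nat -> good_sys N eps W d al -> mn N d l <= mn N d (S l).
Proof. intros. pose proof (Mx_dec N eps W (fun l i => - d l i) al l H (good_opp _ _ _ _ _ H0)).
 unfold Mx, mn in *. lra. Qed.

Lemma Mx_dec_gen N eps W d al l t : (1 <= N)%nat -> good_sys N eps W d al -> Mx N d (l + t)%nat <= Mx N d l.
Proof. intros. induction t. rewrite Nat.add_0_r; lra. replace (l + S t)%nat with (S (l + t)) by lia.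
 eapply Rle_trans; [eapply Mx_dec; eauto| auto]. Qed.
Lemma mn_inc_gen N eps W d al l t : (1 <= N)%nat -> good_sys N eps W d al -> mn N d l <= mn N d (l + t)%nat.
Proof. intros. induction t. rewrite Nat.add_0_r; lra. replace (l + S t)%nat with (S (l + t)) by lia.
 eapply Rle_trans; [ apply IHt | eapply mn_inc; eauto]. Qed.

Lemma contract N eps W d al l0 lc : (1 <= N)%nat -> good_sys N eps W d al ->
  (forall a b, (a < N)%nat -> (b < N)%nat -> exists k, (k <= lc)%nat /\ walk N eps k a b) ->
  Mx N d (l0 + lc)%nat - mn N d (l0 + lc)%nat <= (1 - al ^ lc) * (Mx N d l0 - mn N d l0).
Proof. intros HN G Hd.
 destruct (vmax_att N (fun i => - d l0 i) HN) as [j [Hj E]].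
 assert (Mx N d (l0 + lc)%nat <= Mx N d l0 - al ^ lc * (Mx N d l0 - mn N d l0)).
 { unfold Mx at 1. apply vmax_le; auto. intros i Hi.
   pose proof (gap_all N eps W d al l0 lc HN G Hd lc i j (le_n _) Hi Hj).
   unfold mn, Mx. rewrite E. lra. }
 pose proof (mn_inc_gen N eps W d al l0 lc HN G). lra. Qed.

Lemma al_le1 N eps W d al : (1 <= N)%nat -> good_sys N eps W d al -> al <= 1.
Proof. intros HN [Ha H]. destruct (H 1%nat 0%nat ltac:(lia) ltac:(lia)) as (Hn&Hs&Hii&_).
 rewrite <- Hs. eapply Rle_trans; [apply Hii|]. apply (rsum_ge_term (W 1%nat 0%nat)); auto; lia. Qed.

Lemma cv_le u c b : Un_cv u c -> (exists n0, forall n, (n >= n0)%nat -> u n <= b) -> c <= b.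
Proof. intros Hc [n0 Hb]. destruct (Rle_dec c b); auto. exfalso.
 destruct (Hc (c - b)) as [n1 Hn1]. lra. pose proof (Hn1 (max n0 n1) ltac:(lia)).
 pose proof (Hb (max n0 n1) ltac:(lia)). unfold Rdist in H. apply Rabs_def2 in H. lra. Qed.
Lemma cv_ge u c b : Un_cv u c -> (exists n0, forall n, (n >= n0)%nat -> b <= u n) -> b <= c.
Proof. intros Hc [n0 Hb]. destruct (Rle_dec b c); auto. exfalso.
 destruct (Hc (b - c)) as [n1 Hn1]. lra. pose proof (Hn1 (max n0 n1) ltac:(lia)).
 pose proof (Hb (max n0 n1) ltac:(lia)). unfold Rdist in H. apply Rabs_def2 in H. lra. Qed.

Lemma consensus N eps W d al lc : (1 <= N)%nat -> good_sys N eps W d al ->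
  (forall a b, (a < N)%nat -> (b < N)%nat -> exists k, (k <= lc)%nat /\ walk N eps k a b) ->
  exists c : R, forall i, (i < N)%nat -> Un_cv (fun l => d l i) c.
Proof. intros HN G Hd.
 assert (Hdec : Un_decreasing (Mx N d)) by (intro n; eapply Mx_dec; eauto).
 assert (Hlb : has_lb (Mx N d)).
 { exists (- mn N d 0). intros x [n ->]. unfold opp_seq.
   pose proof (mn_inc_gen N eps W d al 0 n HN G). simpl in H.
   pose proof (mn_le N d n 0 ltac:(lia)). pose proof (Mx_ge N d n 0 ltac:(lia)). lra. }
 destruct (decreasing_cv _ Hdec Hlb) as [c Hc]. exists c. intros i Hi.
 assert (HcM : forall l, c <= Mx N d l).
 { intro l. apply (cv_le _ _ _ Hc). exists l. intros n Hn. replace n with (l + (n - l))%nat by lia.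
   eapply Mx_dec_gen; eauto. }
 assert (Hcm : forall l, mn N d l <= c).
 { intro l. apply (cv_ge _ _ _ Hc). exists l. intros n Hn.
   eapply Rle_trans; [| apply (Mx_ge N d n 0); lia].
   eapply Rle_trans; [| apply (mn_le N d n 0); lia].
   replace n with (l + (n - l))%nat by lia. eapply mn_inc_gen; eauto. }
 set (sp := fun l => Mx N d l - mn N d l).
 assert (Hsp0 : forall l, 0 <= sp l).
 { intro l; unfold sp. pose proof (mn_le N d l 0 ltac:(lia)). pose proof (Mx_ge N d l 0 ltac:(lia)). lra. }
 assert (Hspdec : forall l t, sp (l + t)%nat <= sp l).
 { intros; unfold sp. pose proof (Mx_dec_gen N eps W d al l t HN G). pose proof (mn_inc_gen N eps W d al l t HN G). lra. }
 destruct G as [Ha Hg0] eqn:EG. pose proof (al_le1 _ _ _ _ _ HN G).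
 set (q := 1 - al ^ lc).
 assert (Hq : 0 <= q < 1).
 { unfold q. pose proof (pow_lt al lc Ha). assert (al ^ lc <= 1) by (apply pow_R1_Rle || (rewrite <- (pow1 lc); apply pow_incr; lra)). lra. }
 assert (Hit : forall n, sp (n * lc)%nat <= q ^ n * sp 0%nat).
 { induction n. simpl; lra. replace (S n * lc)%nat with (n * lc + lc)%nat by lia.
   pose proof (contract N eps W d al (n * lc) lc HN G Hd). fold q in H0. unfold sp in *.
   simpl. assert (q * (Mx N d (n * lc)%nat - mn N d (n * lc)%nat) <= q * (q ^ n * (Mx N d 0 - mn N d 0))) by (apply Rmult_le_compat_l; lra).
   lra. }
 intros e He.
 destruct (pow_lt_1_zero q ltac:(rewrite Rabs_pos_eq; lra) (e / (sp 0%nat + 1))) as [n Hn].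
 { apply Rdiv_lt_0_compat; auto. pose proof (Hsp0 0%nat); lra. }
 exists (n * lc)%nat. intros l Hl. unfold Rdist.
 pose proof (Hn n (le_n _)). rewrite Rabs_pos_eq in H0 by (apply pow_le; lra).
 assert (sp l < e).
 { replace l with (n * lc + (l - n * lc))%nat by lia. eapply Rle_lt_trans; [apply Hspdec|].
   eapply Rle_lt_trans; [apply Hit|]. pose proof (Hsp0 0%nat).
   assert (q ^ n * sp 0%nat <= e / (sp 0%nat + 1) * sp 0%nat) by (apply Rmult_le_compat_r; lra).
   assert (e / (sp 0%nat + 1) * sp 0%nat < e).
   { unfold Rdiv. rewrite Rmult_assoc. rewrite <- (Rmult_1_r e) at 2. apply Rmult_lt_compat_l; auto.
     apply (Rmult_lt_reg_l (sp 0%nat + 1)). lra. rewrite <- Rmult_assoc, Rinv_r by lra. lra. }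
   lra. }
 unfold sp in H1. pose proof (HcM l). pose proof (Hcm l). pose proof (mn_le N d l i Hi). pose proof (Mx_ge N d l i Hi).
 apply Rabs_def1; lra. Qed.

Lemma part1 N eps W d al lc : (1 <= N)%nat -> good_sys N eps W d al ->
  (forall a b, (a < N)%nat -> (b < N)%nat -> exists k, (k <= lc)%nat /\ walk N eps k a b) ->
  ~ (exists c, forall i, (i < N)%nat -> d O i = c) ->
  forall l, (lc <= l)%nat -> vmax N (d l) < vmax N (d O).
Proof. intros HN G Hd Hnc l Hl.
 assert (exists j, (j < N)%nat /\ d 0%nat j < vmax N (d 0%nat)).
 { destruct (Classical_Prop.classic (exists j, (j < N)%nat /\ d 0%nat j < vmax N (d 0%nat))); auto.
   exfalso. apply Hnc. exists (vmax N (d 0%nat)). intros. pose proof (vmax_ge N (d 0%nat) i H0).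
   destruct (Rle_lt_or_eq_dec _ _ H1); auto. exfalso; apply H; eauto. }
 destruct H as [j [Hj Hlt]]. destruct (vmax_att N (d l) HN) as [i [Hi E]]. rewrite E.
 pose proof (gap_all N eps W d al 0 lc HN G Hd l i j Hl Hi Hj). simpl in H.
 destruct G as [Ha _]. pose proof (pow_lt al l Ha).
 assert (0 < al ^ l * (vmax N (d 0%nat) - d 0%nat j)) by (apply Rmult_lt_0_compat; lra). lra. Qed.

Lemma int_lt1 (I : R -> Prop) (HIle : forall x, x <= 1 -> I x) x : x < 1 -> interior I x.
Proof. intros. unfold interior, neighbourhood. assert (0 < 1 - x) by lra.
 exists (mkposreal _ H0). intros y Hy. unfold disc in Hy; simpl in Hy. apply HIle.
 apply Rabs_def2 in Hy. lra. Qed.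

Lemma analytic
  (I : R -> Prop) (U dU d2U Uinv : R -> R)
  (HIle : forall x, x <= 1 -> I x)
  (HdU : forall x, interior I x -> derivable_pt_lim U x (dU x))
  (Hd2U : forall x, interior I x -> derivable_pt_lim dU x (d2U x))
  (Hd2Uc : forall x, interior I x -> continuity_pt d2U x)
  (HdUpos : forall x, interior I x -> 0 < dU x)
  (Hd2Uneg : forall x, interior I x -> d2U x < 0)
  (Hincr : forall x y, I x -> I y -> x < y -> U x < U y)
  (HUinv : forall x, I x -> Uinv (U x) = x) (HU0 : U 0 = 0)
  (tau : R) (Htau : 0 < tau < 1) (epsilon : R) (Heps : epsilon < 0) :
  exists Dm K0 K1, 0 < Dm /\ 0 < K0 /\ 0 < K1 /\
  (forall S, epsilon <= S <= 0 -> K0 <= dU (Uinv (U tau + S)) <= Dm) /\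
  (forall S1 S2, epsilon <= S1 -> S2 <= 0 -> S1 <= S2 ->
     K1 * (S2 - S1) <= dU (Uinv (U tau + S1)) - dU (Uinv (U tau + S2))) /\
  Uinv (U tau + 0) = tau.
Proof.
 pose proof (int_lt1 I HIle) as Hint.
 assert (dUdec : forall x y, x < y < 1 -> dU y < dU x).
 { intros x y Hxy. destruct (MVT_cor2 dU d2U x y ltac:(lra)) as [z [Ez Hz]].
   intros; apply Hd2U, Hint; lra. pose proof (Hd2Uneg z (Hint z ltac:(lra))).
   assert (d2U z * (y - x) < 0) by (apply Rmult_neg_pos; lra). lra. }
 assert (Ucont : forall x, x < 1 -> continuity_pt U x).
 { intros. apply derivable_continuous_pt. exists (dU x). apply HdU, Hint; auto. }
 assert (Ule : forall x y, x <= y <= 1 -> U x <= U y).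
 { intros x y H. destruct (Rle_lt_or_eq_dec x y ltac:(lra)). left; apply Hincr; auto; apply HIle; lra. subst; lra. }
 assert (dU0 : 0 < dU 0) by (apply HdUpos, Hint; lra).
 set (y0 := U tau + epsilon).
 set (a := - (Rabs y0 + 1) / dU 0).
 assert (Ha : a < 0).
 { unfold a, Rdiv. apply Rmult_neg_pos. pose proof (Rabs_pos y0); lra. apply Rinv_0_lt_compat; lra. }
 assert (Uaup : U a < y0).
 { destruct (MVT_cor2 U dU a 0 Ha) as [z [Ez Hz]]. intros; apply HdU, Hint; lra.
   pose proof (dUdec z 0 ltac:(lra)).
   assert (dU 0 * (0 - a) <= dU z * (0 - a)) by (apply Rmult_le_compat_r; lra).
   assert (dU 0 * a = - (Rabs y0 + 1)) by (unfold a; field; lra).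
   pose proof (Rle_abs (- y0)). rewrite Rabs_Ropp in H2. rewrite HU0 in Ez.
   assert (dU 0 * (0 - a) = - (dU 0 * a)) by ring. lra. }
 assert (HX : forall S, epsilon <= S <= 0 -> a <= Uinv (U tau + S) <= tau /\ U (Uinv (U tau + S)) = U tau + S).
 { intros S HS. assert (exists x, a <= x <= tau /\ U x = U tau + S) as [x [Hx Ex]].
   { destruct (Req_dec S 0). exists tau; split; [lra| subst; ring].
     assert (Hlt: U a < U tau + S < U tau) by (unfold y0 in Uaup; lra).
     destruct (IVT_interv (fun x => U x - (U tau + S)) a tau) as [z [Hz Ez]].
     intros; apply continuity_pt_minus; [apply Ucont; lra| apply continuity_pt_const; intros ??; auto].
     lra. lra. lra. exists z; split; auto; lra. }
   rewrite <- Ex, HUinv by (apply HIle; lra). split; auto. }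
 destruct (continuity_ab_maj d2U a tau ltac:(lra)) as [xm [Hxm Hxmr]].
 { intros; apply Hd2Uc, Hint; lra. }
 set (cc := - d2U xm). assert (Hcc : 0 < cc) by (unfold cc; pose proof (Hd2Uneg xm (Hint xm ltac:(lra))); lra).
 set (Dm := dU a). assert (HDm : 0 < Dm) by (apply HdUpos, Hint; lra).
 assert (dUgap : forall x y, a <= x -> x < y -> y <= tau -> cc * (y - x) <= dU x - dU y).
 { intros x y H1 H2 H3. destruct (MVT_cor2 dU d2U x y H2) as [z [Ez Hz]].
   intros; apply Hd2U, Hint; lra. pose proof (Hxm z ltac:(lra)).
   assert (d2U z * (y - x) <= d2U xm * (y - x)) by (apply Rmult_le_compat_r; lra).
   unfold cc. lra. }
 assert (Ugap : forall x y, a <= x -> x < y -> y <= tau -> U y - U x <= Dm * (y - x)).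
 { intros x y H1 H2 H3. destruct (MVT_cor2 U dU x y H2) as [z [Ez Hz]].
   intros; apply HdU, Hint; lra. assert (dU z <= Dm) by (unfold Dm; left; apply dUdec; lra).
   assert (dU z * (y - x) <= Dm * (y - x)) by (apply Rmult_le_compat_r; lra). lra. }
 exists Dm, (dU tau), (cc / Dm). split; auto. split; [apply HdUpos, Hint; lra|].
 split; [apply Rdiv_lt_0_compat; auto|]. split; [|split].
 - intros S HS. destruct (HX S HS) as [Hb _]. split.
   + destruct (Req_dec (Uinv (U tau + S)) tau) as [E|E]. rewrite E; lra. left; apply dUdec; lra.
   + unfold Dm. destruct (Req_dec (Uinv (U tau + S)) a) as [E|E]. rewrite E; lra. left; apply dUdec; lra.
 - intros S1 S2 H1 H2 H3. destruct (HX S1 ltac:(lra)) as [Hb1 E1]. destruct (HX S2 ltac:(lra)) as [Hb2 E2].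
   destruct (Req_dec S1 S2). subst. lra.
   set (x1 := Uinv (U tau + S1)) in *. set (x2 := Uinv (U tau + S2)) in *.
   assert (x1 < x2).
   { destruct (Rlt_le_dec x1 x2); auto. pose proof (Ule x2 x1 ltac:(lra)). lra. }
   pose proof (dUgap x1 x2 ltac:(lra) H0 ltac:(lra)). pose proof (Ugap x1 x2 ltac:(lra) H0 ltac:(lra)).
   assert (S2 - S1 <= Dm * (x2 - x1)) by lra.
   assert (cc / Dm * (S2 - S1) <= cc / Dm * (Dm * (x2 - x1))).
   { apply Rmult_le_compat_l; auto. left; apply Rdiv_lt_0_compat; auto. }
   replace (cc / Dm * (Dm * (x2 - x1))) with (cc * (x2 - x1)) in H7 by (field; lra). lra.
 - rewrite Rplus_0_r. apply HUinv, HIle; lra.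
Qed.

Lemma rsum_shift f n : rsum f (S n) = f 0%nat + rsum (fun m => f (S m)) n.
Proof. induction n. simpl; ring. change (rsum f (S (S n))) with (rsum f (S n) + f (S n)).
 rewrite IHn. simpl. ring. Qed.

Lemma rsum_point F n x : (x < n)%nat ->
  rsum F n = rsum (fun j => if Nat.eqb j x then 0 else F j) n + F x.
Proof. induction n; intros; [lia|]. simpl. destruct (Nat.eq_dec x n).
 - subst. rewrite Nat.eqb_refl.
   rewrite (rsum_ext (fun j => if Nat.eqb j n then 0 else F j) F). ring.
   intros. destruct (Nat.eqb_spec j n); [lia| auto].
 - rewrite IHn by lia. destruct (Nat.eqb_spec n x); [lia|]. ring. Qed.

Lemma rsum_zero F n : (forall j, (j < n)%nat -> F j = 0) -> rsum F n = 0.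
Proof. induction n; simpl; intros; auto. rewrite IHn, H; auto; lra. Qed.

Lemma core N : forall l F, NoDup l -> (forall x, In x l -> (x < N)%nat) ->
  (forall j, (j < N)%nat -> ~ In j l -> F j = 0) ->
  rsum F N = rsum (fun m => F (nth m l 0%nat)) (length l).
Proof. induction l as [|x r IH]; intros F Hnd Hlt Hz.
 - simpl. apply rsum_zero. intros; apply Hz; auto.
 - rewrite (rsum_point F N x) by (apply Hlt; left; auto).
   inversion Hnd; subst.
   rewrite (IH (fun j => if Nat.eqb j x then 0 else F j)); auto.
   + simpl length. rewrite rsum_shift. simpl.
     rewrite (rsum_ext (fun m => if Nat.eqb (nth m r 0%nat) x then 0 else F (nth m r 0%nat))
                       (fun m => F (nth m r 0%nat))). ring.
     intros. destruct (Nat.eqb_spec (nth j r 0%nat) x); auto. exfalso. apply H1. rewrite <- e. apply nth_In; auto.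
   + intros; apply Hlt; right; auto.
   + intros j Hj Hn. destruct (Nat.eqb_spec j x); auto. apply Hz; auto. intros [E|E]; auto.
Qed.

Lemma pos_nth l m : NoDup l -> (m < length l)%nat -> Defs.pos (nth m l 0%nat) l = Some m.
Proof. revert m; induction l as [|x r IH]; intros m Hnd Hm; simpl in *; [lia|].
 inversion Hnd; subst. destruct m.
 - rewrite Nat.eqb_refl; auto.
 - destruct (Nat.eqb_spec x (nth m r 0%nat)). exfalso; apply H1; rewrite e; apply nth_In; lia.
   rewrite IH; auto; lia. Qed.

Lemma pos_some j l m : Defs.pos j l = Some m -> (m < length l)%nat /\ nth m l 0%nat = j.
Proof. revert m; induction l as [|x r IH]; intros m H; simpl in *; [discriminate|].
 destruct (Nat.eqb_spec x j). inversion H; subst; split; auto; lia.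
 destruct (Defs.pos j r) eqn:E; [|discriminate]. inversion H; subst. destruct (IH n0 eq_refl). split; auto; lia. Qed.

Lemma pos_none j l : ~ In j l -> Defs.pos j l = None.
Proof. induction l as [|x r IH]; intros H; simpl; auto. destruct (Nat.eqb_spec x j). exfalso; apply H; left; auto.
 rewrite IH; auto. intro; apply H; right; auto. Qed.

Lemma pos_in j l : In j l -> exists m, Defs.pos j l = Some m.
Proof. induction l as [|x r IH]; intros H; simpl in *; [contradiction|]. destruct (Nat.eqb_spec x j). eauto.
 destruct H; [contradiction|]. destruct (IH H) as [m ->]. eauto. Qed.

Lemma rsum_tele p n : rsum (fun m => p (S m) - p m) n = p n - p 0%nat.
Proof. induction n; simpl; [ring| rewrite IHn; ring]. Qed.

Lemma rsum_ind N i v : (i < N)%nat -> rsum (fun j => if Nat.eqb i j then v else 0) N = v.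
Proof. intros. rewrite (rsum_point _ N i H). rewrite rsum_zero. rewrite Nat.eqb_refl; ring.
 intros. destruct (Nat.eqb_spec j i); auto. destruct (Nat.eqb_spec i j); auto; lia. Qed.

Lemma fin_pos1 (g : nat -> R) n : exists e, 0 < e /\ forall k, (k < n)%nat -> g k <> 0 -> e <= Rabs (g k).
Proof. induction n. exists 1; split; [lra| intros; lia].
 destruct IHn as [e [He H]]. destruct (Req_dec (g n) 0).
 - exists e; split; auto. intros. destruct (Nat.eq_dec k n). subst; contradiction. apply H; auto; lia.
 - exists (Rmin e (Rabs (g n))). split. apply Rmin_pos; auto. apply Rabs_pos_lt; auto.
   intros. destruct (Nat.eq_dec k n). subst; apply Rmin_r. eapply Rle_trans; [apply Rmin_l| apply H; auto; lia]. Qed.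

Lemma fin_pos2 (f : nat -> nat -> R) n m : exists e, 0 < e /\ forall i j, (i < n)%nat -> (j < m)%nat -> f i j <> 0 -> e <= Rabs (f i j).
Proof. induction n. exists 1; split; [lra| intros; lia].
 destruct IHn as [e [He H]]. destruct (fin_pos1 (f n) m) as [e' [He' H']].
 exists (Rmin e e'). split. apply Rmin_pos; auto.
 intros. destruct (Nat.eq_dec i n). subst; eapply Rle_trans; [apply Rmin_r| apply H'; auto].
 eapply Rle_trans; [apply Rmin_l| apply H; auto; lia]. Qed.


Lemma partial_le (g : nat -> R) : forall n, (forall t, (t < n)%nat -> g t <= 0) ->
  forall m, (m <= n)%nat -> rsum g n <= rsum g m /\ rsum g m <= 0.
Proof. induction n; intros Hg m Hm.
 - replace m with 0%nat by lia. simpl; lra.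
 - destruct (Nat.eq_dec m (S n)). subst. split; [lra|]. simpl.
   destruct (IHn ltac:(intros; apply Hg; lia) n (le_n _)). pose proof (Hg n ltac:(lia)). lra.
   destruct (IHn ltac:(intros; apply Hg; lia) m ltac:(lia)). simpl. pose proof (Hg n ltac:(lia)). lra. Qed.

Lemma row_props (U dU Uinv : R -> R) tau epsilon (eps : nat -> nat -> R) N (O : nat -> list nat) i
  Dm K0 K1 e :
  0 < Dm -> 0 < K0 -> 0 < K1 -> 0 < e ->
  (forall S, epsilon <= S <= 0 -> K0 <= dU (Uinv (U tau + S)) <= Dm) ->
  (forall S1 S2, epsilon <= S1 -> S2 <= 0 -> S1 <= S2 ->
     K1 * (S2 - S1) <= dU (Uinv (U tau + S1)) - dU (Uinv (U tau + S2))) ->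
  (forall i j, (i < N)%nat -> (j < N)%nat -> eps i j <> 0 -> e <= Rabs (eps i j)) ->
  (forall i j, (i < N)%nat -> (j < N)%nat -> eps i j <= 0) ->
  (i < N)%nat -> eps i i = 0 -> rsum (fun j => eps i j) N = epsilon ->
  is_ordering N eps O ->
  (forall j, (j < N)%nat -> 0 <= Amat U dU Uinv tau epsilon eps O i j) /\
  rsum (Amat U dU Uinv tau epsilon eps O i) N = 1 /\
  Rmin (K0 / Dm) (K1 * e / Dm) <= Amat U dU Uinv tau epsilon eps O i i /\
  (forall j, Pre N eps i j -> Rmin (K0 / Dm) (K1 * e / Dm) <= Amat U dU Uinv tau epsilon eps O i j).
Proof.
 intros HDm HK0 HK1 He HB HG He2 Hinh Hi Hii Hsum HO.
 destruct (HO i Hi) as [Hnd Hin].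
 set (L := O i) in *.
 assert (Hlt : forall x, In x L -> (x < N)%nat) by (intros x Hx; apply Hin in Hx; destruct Hx; auto).
 assert (HiL : ~ In i L) by (intro H; apply Hin in H; destruct H; contradiction).
 set (Ps := fun m => rsum (fun m => eps i (nth m L 0%nat)) m).
 assert (HSlen : Ps (length L) = epsilon).
 { unfold Ps. rewrite <- Hsum. symmetry. apply (core N L (fun j => eps i j)); auto.
   intros j Hj Hn. destruct (Req_dec (eps i j) 0); auto. exfalso; apply Hn, Hin; split; auto. }
 assert (Hterm : forall t, (t < length L)%nat -> eps i (nth t L 0%nat) <= - e).
 { intros t Ht. assert (In (nth t L 0%nat) L) by (apply nth_In; auto). apply Hin in H. destruct H as [Hj Hne].
   pose proof (He2 i _ Hi Hj Hne). pose proof (Hinh i _ Hi Hj). rewrite Rabs_left1 in H by auto. lra. }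
 assert (HSb : forall m, (m <= length L)%nat -> epsilon <= Ps m <= 0).
 { intros m Hm. destruct (partial_le (fun m => eps i (nth m L 0%nat)) (length L)) with (m := m) as [H1 H2]; auto.
   intros t Ht; pose proof (Hterm t Ht); lra. unfold Ps in *. lra. }
 set (D := dU (Uinv (U tau + epsilon))).
 assert (HD : K0 <= D <= Dm) by (apply HB; pose proof (HSb (length L) (le_n _)); lra).
 set (p := fun m => dU (Uinv (U tau + Ps m)) / D).
 assert (Hp : forall m, p_coef U dU Uinv tau epsilon eps O i m = p m) by reflexivity.
 assert (Hal1 : Rmin (K0 / Dm) (K1 * e / Dm) <= K0 / D).
 { eapply Rle_trans; [apply Rmin_l|]. unfold Rdiv. apply Rmult_le_compat_l; [lra|]. apply Rinv_le_contravar; lra. }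
 assert (Hal2 : Rmin (K0 / Dm) (K1 * e / Dm) <= K1 * e / D).
 { eapply Rle_trans; [apply Rmin_r|]. unfold Rdiv. apply Rmult_le_compat_l; [nra|]. apply Rinv_le_contravar; lra. }
 assert (Hinc : forall m, (m < length L)%nat -> Rmin (K0 / Dm) (K1 * e / Dm) <= p (Datatypes.S m) - p m).
 { intros m Hm. unfold p. change (Ps (Datatypes.S m)) with (Ps m + eps i (nth m L 0%nat)).
   pose proof (Hterm m Hm). pose proof (HSb m ltac:(lia)). pose proof (HSb (Datatypes.S m) ltac:(lia)).
   change (Ps (Datatypes.S m)) with (Ps m + eps i (nth m L 0%nat)) in H1.
   pose proof (HG (Ps m + eps i (nth m L 0%nat)) (Ps m) ltac:(lra) ltac:(lra) ltac:(lra)).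
   assert (K1 * e <= dU (Uinv (U tau + (Ps m + eps i (nth m L 0%nat)))) - dU (Uinv (U tau + Ps m))) by nra.
   eapply Rle_trans; [apply Hal2|]. unfold Rdiv. rewrite <- Rmult_minus_distr_r.
   apply Rmult_le_compat_r; auto. left; apply Rinv_0_lt_compat; lra. }
 assert (Hp0 : Rmin (K0 / Dm) (K1 * e / Dm) <= p 0%nat).
 { eapply Rle_trans; [apply Hal1|]. unfold p, Rdiv. apply Rmult_le_compat_r. left; apply Rinv_0_lt_compat; lra.
   apply HB. pose proof (HSb 0%nat ltac:(lia)); lra. }
 assert (Hal0 : 0 < Rmin (K0 / Dm) (K1 * e / Dm)).
 { apply Rmin_pos; apply Rdiv_lt_0_compat; nra. }
 set (G := fun j => match Defs.pos j L with Some m => p (Datatypes.S m) - p m | None => 0 end).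
 assert (HA : forall j, Amat U dU Uinv tau epsilon eps O i j = (if Nat.eqb i j then p 0%nat else 0) + G j).
 { intros j. unfold Amat. fold L. rewrite !Hp. unfold G. destruct (Nat.eqb_spec i j).
   subst. rewrite pos_none; auto. ring. change (O i) with L. destruct (Defs.pos j L); repeat match goal with |- context [p_coef ?a ?b ?c ?d ?e ?f ?g ?h ?k] => change (p_coef a b c d e f g h k) with (p k) end; ring. }
 assert (HGnn : forall j, 0 <= G j).
 { intros j. unfold G. destruct (Defs.pos j L) eqn:E; [|lra]. destruct (pos_some _ _ _ E).
   pose proof (Hinc n H); lra. }
 split; [|split; [|split]].
 - intros j Hj. rewrite HA. pose proof (HGnn j). destruct (Nat.eqb i j); lra.
 - rewrite (rsum_ext _ (fun j => (if Nat.eqb i j then p 0%nat else 0) + G j)) by (intros; apply HA).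
   rewrite rsum_plus, rsum_ind by auto.
   rewrite (core N L G); auto.
   + rewrite (rsum_ext _ (fun m => p (Datatypes.S m) - p m)).
     * rewrite rsum_tele. unfold p. fold (Ps (length L)). rewrite HSlen. fold D. field. lra.
     * intros m Hm. unfold G. rewrite pos_nth; auto.
   + intros j Hj Hn. unfold G. rewrite pos_none; auto.
 - rewrite HA, Nat.eqb_refl. pose proof (HGnn i). lra.
 - intros j Hj. assert (In j L) by (apply Hin; auto). destruct (pos_in _ _ H) as [m Hm].
   destruct (pos_some _ _ _ Hm). rewrite HA. unfold G. rewrite Hm.
   destruct (Nat.eqb_spec i j) as [Eij|Eij]. exfalso; apply HiL; rewrite Eij; auto. pose proof (Hinc m H0). lra.
Qed.

Theorem mainTheorem7
  (I : R -> Prop) (U dU d2U Uinv : R -> R)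
  (HI : is_interval I) (HIle : forall x, x <= 1 -> I x)
  (HdU : forall x, interior I x -> derivable_pt_lim U x (dU x))
  (Hd2U : forall x, interior I x -> derivable_pt_lim dU x (d2U x))
  (Hd2Uc : forall x, interior I x -> continuity_pt d2U x)
  (HdUpos : forall x, interior I x -> 0 < dU x)
  (Hd2Uneg : forall x, interior I x -> d2U x < 0)
  (Hincr : forall x y, I x -> I y -> x < y -> U x < U y)
  (HU0 : U 0 = 0) (HU1 : U 1 = 1)
  (HUinv : forall x, I x -> Uinv (U x) = x)
  (N : nat) (HN : (2 <= N)%nat)
  (tau : R) (Htau : 0 < tau < 1)
  (eps : nat -> nat -> R) (epsilon : R)
  (Hdiag : forall i, (i < N)%nat -> eps i i = 0)
  (Hne : forall i, (i < N)%nat -> exists j, Pre N eps i j)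
  (Hsum : forall i, (i < N)%nat -> rsum (fun j => eps i j) N = epsilon)
  (Hinh : forall i j, (i < N)%nat -> (j < N)%nat -> eps i j <= 0)
  (Heps : epsilon < 0)
  (Hsc : strongly_connected N eps)
  (lc : nat) (Hlc : is_diameter N eps lc)
  (delta : nat -> nat -> R) (Ord : nat -> nat -> list nat)
  (HOrd : forall l, (1 <= l)%nat -> is_ordering N eps (Ord l))
  (Hcons : forall l, (1 <= l)%nat -> consistent N (Ord l) (delta (l - 1)%nat))
  (Hrec : forall l i, (1 <= l)%nat -> (i < N)%nat ->
     delta l i = rsum (fun j => Amat U dU Uinv tau epsilon eps (Ord l) i j * delta (l - 1)%nat j) N) :
  ((forall i, (i < N)%nat -> 0 <= delta O i) ->
   ~ (exists c, forall i, (i < N)%nat -> delta O i = c) ->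
   forall l, (lc <= l)%nat -> vmax N (delta l) < vmax N (delta O))
  /\
  (exists c : R, forall i, (i < N)%nat -> Un_cv (fun l => delta l i) c).
Proof.
 destruct (analytic I U dU d2U Uinv HIle HdU Hd2U Hd2Uc HdUpos Hd2Uneg Hincr HUinv HU0 tau Htau epsilon Heps)
   as (Dm & K0 & K1 & HDm & HK0 & HK1 & HB & HG & _).
 destruct (fin_pos2 eps N N) as [e [He He2]].
 set (al := Rmin (K0 / Dm) (K1 * e / Dm)).
 assert (Gs : good_sys N eps (fun l => Amat U dU Uinv tau epsilon eps (Ord l)) delta al).
 { split.
   - apply Rmin_pos; apply Rdiv_lt_0_compat; nra.
   - intros l i Hl Hi.
     destruct (row_props U dU Uinv tau epsilon eps N (Ord l) i Dm K0 K1 e HDm HK0 HK1 He HB HG He2 Hinh Hi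
       (Hdiag i Hi) (Hsum i Hi) (HOrd l Hl)) as (H1 & H2 & H3 & H4).
     repeat split; auto. }
 assert (HN1 : (1 <= N)%nat) by lia.
 destruct Hlc as [Hd _].
 split.
 - intros _. apply (part1 N eps _ delta al lc HN1 Gs Hd).
 - apply (consensus N eps _ delta al lc HN1 Gs Hd).
Qed.
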